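(* Let $\pi:\mathbb{F}\twoheadrightarrow\Gamma$ be an epimorphism from a free group on a finite basis $X$ which is not an isomorphism, let $S=\pi(X)$, and suppose $\Gamma$ is sofic and stable. Then there exists $C>0$ such that for all $l\ge C$, $$\mathcal{D}_\Gamma^S\big(2F_\Gamma^\pi(10l)\big)!\ge\mathcal{R}_\Gamma^S(l).$$
   Context: For finite $\Omega$, $d_\Omega(\sigma,\tau)=|\{\omega:\sigma(\omega)\ne\tau(\omega)\}|/|\Omega|$. A pair $(\delta,E)$, $\delta\in(0,1]$, $E\subseteq\ker\pi$ finite, is valid for $\epsilon>0$ if for every finite $\Omega$ and homomorphism $\rho:\mathbb{F}\to\mathrm{Sym}(\Omega)$ with $d_\Omega(\rho(r),\mathrm{id})<\delta$ for all $r\in E$ there is a homomorphism $\phi:\Gamma\to\mathrm{Sym}(\Omega)$ with $d_\Omega(\rho(x),\phi(\pi(x)))<\epsilon$ for all $x\in X$; $\Gamma$ is stable if valid pairs exist for all $\epsilon$. $F_\Gamma^\pi(x)=\inf\{\|E\|/\delta:(\delta,E)\text{ valid for }1/x\}$, $\|E\|=\sum_{r\in E}|r|$ (word length in $X$). For finite $A\subseteq\Gamma$ and $\epsilon>0$, an $(A,\epsilon)$-almost representation is a map $\phi:A\to\mathrm{Sym}(\Omega)$, $\Omega$ finite, such that for $g,h\in A$: if $gh\in A$ then $d_\Omega(\phi(gh),\phi(g)\phi(h))<\epsilon$; if $g\ne e$ then $d_\Omega(\phi(g),\mathrm{id})>1-\epsilon$; if $e\in A$ then $\phi(e)=\mathrm{id}$.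 $\Gamma$ is sofic if these exist for all finite $A$ and $\epsilon>0$. $B_S(l)$ is the ball of radius $l$ in the word metric of $S$. The sofic profile $\mathcal{D}_\Gamma^S(l)$ is the minimal $|\Omega|$ for which a $(B_S(l),1/l)$-almost representation into $\mathrm{Sym}(\Omega)$ exists; for real $t\ge1$, $\mathcal{D}_\Gamma^S(t)=\mathcal{D}_\Gamma^S(\lfloor t\rfloor)$. $\mathcal{R}_\Gamma^S(l)$ is the minimal order of a finite group $\Delta$ with a homomorphism $\Gamma\to\Delta$ injective on $B_S(l)$. *)

(* Defs.v *)
From mathcomp Require Import all_boot all_order all_algebra all_fingroup.
From mathcomp Require Import classical_sets reals Rstruct.

Set Implicit Arguments.
Unset Strict Implicit.
Unset Printing Implicit Defensive.

Import Order.TTheory GRing.Theory Num.Theory.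

Notation R := Rdefinitions.R.

(* The free group F on the finite basis X = 'I_k.                      *)
(* A letter (i, false) stands for x_i, (i, true) for x_i^{-1}.         *)
(* Elements of F are the reduced words.                                *)
Definition letter (k : nat) := ('I_k * bool)%type.

Fixpoint reduced (k : nat) (w : seq (letter k)) : bool :=
  match w with
  | a :: ((b :: _) as t) => ~~ ((a.1 == b.1) && (a.2 != b.2)) && reduced t
  | _ => true
  end.

(* value of a word under the homomorphism F -> G sending x_i to f i
   (universal property of the free group: homomorphisms F -> G are
   exactly the maps X -> G). *)
Definition weval (k : nat) (G : groupType) (f : 'I_k -> G)
    (w : seq (letter k)) : G :=
  foldr (fun a acc => ((if a.2 then (f a.1)^-1 else f a.1) * acc)%g) 1%g w.

(* ker pi, for pi : F -> Gamma, x_i |-> g i *)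
Definition in_ker (k : nat) (Gamma : groupType) (g : 'I_k -> Gamma)
    (w : seq (letter k)) : Prop :=
  reduced w /\ weval g w = 1%g.

Definition epi (k : nat) (Gamma : groupType) (g : 'I_k -> Gamma) : Prop :=
  forall y : Gamma, exists w : seq (letter k), reduced w /\ weval g w = y.

(* pi is not an isomorphism (given surjectivity): nontrivial kernel *)
Definition not_iso (k : nat) (Gamma : groupType) (g : 'I_k -> Gamma) : Prop :=
  exists w : seq (letter k), in_ker g w /\ w <> [::].

Definition hdist (n : nat) (s t : {perm 'I_n}) : R :=
  ((#|[set o | s o != t o]|)%:R / n%:R)%R.

Definition is_hom (Gamma H : groupType) (phi : Gamma -> H) : Prop :=
  forall a b : Gamma, phi (a * b)%g = (phi a * phi b)%g.

Definition Enorm (k : nat) (E : seq (seq (letter k))) : nat :=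
  \sum_(r <- E) size r.

Definition valid_pair (k : nat) (Gamma : groupType) (g : 'I_k -> Gamma)
    (eps : R) (delta : R) (E : seq (seq (letter k))) : Prop :=
  (0 < delta)%R /\ (delta <= 1)%R /\ uniq E /\
  (forall r, r \in E -> in_ker g r) /\
  forall (n : nat) (rho : 'I_k -> {perm 'I_n}),
    (forall r, r \in E -> (hdist (weval rho r) 1%g < delta)%R) ->
    exists phi : Gamma -> {perm 'I_n},
      is_hom phi /\ forall i : 'I_k, (hdist (rho i) (phi (g i)) < eps)%R.

Definition stable (k : nat) (Gamma : groupType) (g : 'I_k -> Gamma) : Prop :=
  forall eps : R, (0 < eps)%R -> exists delta E, valid_pair g eps delta E.

Definition stab_fun (k : nat) (Gamma : groupType) (g : 'I_k -> Gamma)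
    (x : R) : R :=
  inf [set y : R | exists delta E,
          valid_pair g (x^-1)%R delta E /\ y = ((Enorm E)%:R / delta)%R].

(* (A, eps)-almost representation into Sym('I_n); A given as a predicate
   (a finite set); phi is only relevant on A. *)
Definition almost_rep (Gamma : groupType) (A : Gamma -> Prop) (eps : R)
    (n : nat) (phi : Gamma -> {perm 'I_n}) : Prop :=
  (forall a b, A a -> A b -> A (a * b)%g ->
     (hdist (phi (a * b)%g) (phi a * phi b)%g < eps)%R) /\
  (forall a, A a -> a <> 1%g -> (1 - eps < hdist (phi a) 1%g)%R) /\
  (A 1%g -> phi 1%g = 1%g).

Definition sofic (Gamma : groupType) : Prop :=
  forall (A : seq Gamma) (eps : R), (0 < eps)%R ->
    exists (n : nat) (phi : Gamma -> {perm 'I_n}),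
      almost_rep (fun a => a \in A) eps phi.

Definition ball (k : nat) (Gamma : groupType) (g : 'I_k -> Gamma) (l : nat)
    (a : Gamma) : Prop :=
  exists w : seq (letter k), size w <= l /\ weval g w = a.

Definition is_least (P : nat -> Prop) (n : nat) : Prop :=
  P n /\ forall m, P m -> n <= m.

(* sofic profile D_Gamma^S(l) = least n with a (B_S(l), 1/l)-almost rep *)
Definition sofic_profile_at (k : nat) (Gamma : groupType) (g : 'I_k -> Gamma)
    (l : nat) (n : nat) : Prop :=
  exists phi : Gamma -> {perm 'I_n}, almost_rep (ball g l) (l%:R^-1)%R phi.

(* "R_Gamma^S(l) <= N": there is a finite group Delta of order <= N and a
   homomorphism Gamma -> Delta injective on B_S(l). *)
Definition residual_le (k : nat) (Gamma : groupType) (g : 'I_k -> Gamma)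
    (l : nat) (N : nat) : Prop :=
  exists (Delta : finGroupType) (f : Gamma -> Delta),
    is_hom f /\
    (forall a b, ball g l a -> ball g l b -> f a = f b -> a = b) /\
    #|[set: Delta]| <= N.

(* Main.v *)
Require Import Defs.
From mathcomp Require Import all_boot all_order all_algebra all_fingroup.
From mathcomp Require Import classical_sets reals Rstruct.
From mathcomp Require Import zify ring lra.
From Stdlib Require Classical_Prop.
Set Implicit Arguments.
Unset Strict Implicit.
Unset Printing Implicit Defensive.
Import Order.TTheory GRing.Theory Num.Theory.


Section Words.
Variable k : nat.

Definition winv (w : seq (letter k)) : seq (letter k) :=
  rev (map (fun a => (a.1, ~~ a.2)) w).

Lemma weval_cat (G : groupType) (f : 'I_k -> G) u v :
  weval f (u ++ v) = (weval f u * weval f v)%g.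
Proof. by elim: u => [|a u IH] /=; rewrite ?mul1g // IH mulgA. Qed.

Lemma weval_rcons (G : groupType) (f : 'I_k -> G) u a :
  weval f (rcons u a) = (weval f u * weval f [:: a])%g.
Proof. by rewrite -cats1 weval_cat. Qed.

Lemma weval_winv (G : groupType) (f : 'I_k -> G) u :
  weval f (winv u) = (weval f u)^-1%g.
Proof.
elim: u => [|a u IH]; first by rewrite /= invg1.
rewrite /winv /= rev_cons weval_rcons -/(winv u) IH /= mulg1 invMg.
by case: (a.2) => /=; rewrite ?invgK.
Qed.

Lemma size_winv u : size (winv u) = size u.
Proof. by rewrite /winv size_rev size_map. Qed.

Lemma hom1 (G H : groupType) (phi : G -> H) : is_hom phi -> phi 1%g = 1%g.
Proof.
move=> h; apply: (@mulgI _ (phi 1%g)); rewrite -h !mulg1. by [].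
Qed.

Lemma homV (G H : groupType) (phi : G -> H) x : is_hom phi -> phi x^-1%g = (phi x)^-1%g.
Proof.
move=> h; apply: (@mulIg _ (phi x)); rewrite -h mulVg mulVg; exact: hom1.
Qed.

Lemma weval_hom (G H : groupType) (phi : G -> H) (f : 'I_k -> G) w :
  is_hom phi -> weval (fun i => phi (f i)) w = phi (weval f w).
Proof.
move=> h; elim: w => [|a w IH] /=; first by rewrite hom1.
by rewrite h IH; case: (a.2) => //; rewrite homV.
Qed.

End Words.

Section SecB.

Section Hd.
Variable n : nat.
Implicit Types s t u : {perm 'I_n}.

Definition cnt s t := #|[set o | s o != t o]|.

Lemma cnt_sym s t : cnt s t = cnt t s.
Proof. by rewrite /cnt; apply: eq_card => o; rewrite !inE eq_sym. Qed.

Lemma cnt_tri s t u : cnt s u <= cnt s t + cnt t u.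
Proof.
rewrite /cnt; apply: leq_trans (leq_card_setU [set o | s o != t o] [set o | t o != u o]).
apply: subset_leq_card; apply/fintype.subsetP => o; rewrite !inE.
by case: (s o =P t o) => [->|].
Qed.

Lemma cnt_refl s : cnt s s = 0.
Proof. by apply/eqP; rewrite cards_eq0; apply/eqP/setP => o; rewrite !inE eqxx. Qed.

Lemma cnt_mulR s t u : cnt (s * u) (t * u) = cnt s t.
Proof. by rewrite /cnt; apply: eq_card => o; rewrite !inE !permM (inj_eq perm_inj). Qed.

Lemma cnt_mulL s t u : cnt (u * s) (u * t) = cnt s t.
Proof.
rewrite /cnt -[RHS](card_preimset _ (@perm_inj _ u)); apply: eq_card => o.
by rewrite !inE !permM.
Qed.

Lemma cnt_inv s t : cnt s^-1 t^-1 = cnt s t.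
Proof.
rewrite -(cnt_mulL _ _ s) -(cnt_mulR _ _ t) mulgV mul1g -mulgA mulVg mulg1 cnt_sym. by [].
Qed.

Lemma cnt_mul2 s t s' t' : cnt (s * t) (s' * t') <= cnt s s' + cnt t t'.
Proof.
apply: leq_trans (cnt_tri _ (s' * t) _) _.
by rewrite cnt_mulR cnt_mulL.
Qed.

Lemma cnt_le s t : cnt s t <= n.
Proof. by rewrite /cnt; apply: leq_trans (max_card _) _; rewrite card_ord. Qed.

Local Open Scope ring_scope.

Lemma hdE s t : hdist s t = (cnt s t)%:R / n%:R.
Proof. by []. Qed.

Lemma hd_ge0 s t : 0 <= hdist s t.
Proof. by rewrite hdE divr_ge0. Qed.

Lemma hd_le (a b c d : {perm 'I_n}) (e f : {perm 'I_n}) :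
  (cnt a b <= cnt c d + cnt e f)%N -> hdist a b <= hdist c d + hdist e f.
Proof.
move=> H; rewrite !hdE -mulrDl ler_wpM2r ?invr_ge0 ?ler0n //.
by rewrite -natrD ler_nat.
Qed.

Lemma hd_sym s t : hdist s t = hdist t s.
Proof. by rewrite !hdE cnt_sym. Qed.
Lemma hd_tri s t u : hdist s u <= hdist s t + hdist t u.
Proof. exact/hd_le/cnt_tri. Qed.
Lemma hd_refl s : hdist s s = 0.
Proof. by rewrite hdE cnt_refl mul0r. Qed.
Lemma hd_mulR s t u : hdist (s * u) (t * u) = hdist s t.
Proof. by rewrite !hdE cnt_mulR. Qed.
Lemma hd_mulL s t u : hdist (u * s) (u * t) = hdist s t.
Proof. by rewrite !hdE cnt_mulL. Qed.
Lemma hd_inv s t : hdist s^-1 t^-1 = hdist s t.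
Proof. by rewrite !hdE cnt_inv. Qed.
Lemma hd_mul2 s t s' t' : hdist (s * t) (s' * t') <= hdist s s' + hdist t t'.
Proof. exact/hd_le/cnt_mul2. Qed.
End Hd.

End SecB.

Section SecC.
Local Open Scope ring_scope.

Lemma wdist k n (f f' : 'I_k -> {perm 'I_n}) (e : R) w :
  (forall i, hdist (f i) (f' i) <= e) ->
  hdist (weval f w) (weval f' w) <= (size w)%:R * e.
Proof.
move=> H; elim: w => [|a w IH] /=; first by rewrite hd_refl mul0r.
apply: le_trans (hd_mul2 _ _ _ _) _.
rewrite -addn1 natrD mulrDl mul1r addrC lerD //.
by case: (a.2); rewrite ?hd_inv.
Qed.

Lemma ball_w k (Gamma : groupType) (g : 'I_k -> Gamma) L w :
  (size w <= L)%N -> ball g L (weval g w).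
Proof. by move=> h; exists w. Qed.

Lemma approx k (Gamma : groupType) (g : 'I_k -> Gamma) L D eta
   (psi : Gamma -> {perm 'I_D}) :
  almost_rep (ball g L) eta psi -> forall w, (size w <= L)%N ->
  hdist (weval (fun i => psi (g i)) w) (psi (weval g w)) <= (size w)%:R * eta.
Proof.
move=> [Hm [_ H1]] w; elim: w => [|[i b] w IH] /= Hs.
  by rewrite H1 ?hd_refl ?mul0r //; exists [::].
have Hs' : (size w <= L)%N by apply: ltnW.
have Ha : ball g L (g i) by exists [:: (i, false)] => /=; rewrite mulg1; split => //; apply: leq_trans Hs.
have Hw : ball g L (weval g w) by exists w.
rewrite -addn1 natrD mulrDl mul1r.
case: b Hs => /= Hs.
  set y := weval g w.
  apply: le_trans (hd_tri _ ((psi (g i))^-1 * psi y)%g _) _.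
  rewrite hd_mulL lerD ?IH //.
  rewrite -(hd_mulL _ _ (psi (g i))) mulgA mulgV mul1g hd_sym.
  have Hb : ball g L ((g i)^-1 * y)%g by exists ((i, true) :: w).
  have -> : psi y = psi (g i * ((g i)^-1 * y))%g by rewrite mulKVg.
  rewrite hd_sym; apply/ltW/Hm => //.
  by rewrite mulKVg.
set y := weval g w.
apply: le_trans (hd_tri _ (psi (g i) * psi y)%g _) _.
rewrite hd_mulL lerD ?IH // hd_sym.
apply/ltW/Hm => //.
by exists ((i, false) :: w).
Qed.

End SecC.


Lemma extend_perm (X : finType) (D : {set X}) (f : X -> X) :
  {in D &, injective f} -> exists s : {perm X}, {in D, s =1 f}.
Proof.
move=> finj.
set A := enum (~: D); set B := enum (~: (f @: D)).
have sAB : size A = size B.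
  rewrite /A /B -!cardE.
  have := cardsC D; have := cardsC (f @: D); rewrite card_in_imset //.
  by move=> <- /eqP; rewrite eqn_add2l => /eqP.
pose h x := nth x B (index x A).
pose s x := if x \in D then f x else h x.
have hB x : x \notin D -> h x \in B.
  by move=> xD; apply: mem_nth; rewrite -sAB index_mem /A mem_enum inE.
have sinj : injective s.
  move=> x y; rewrite /s.
  case: (boolP (x \in D)) => xD; case: (boolP (y \in D)) => yD.
  - exact: finj.
  - move=> E; have := hB y yD; rewrite -E /B mem_enum inE.
    by rewrite (imset_f _ xD).
  - move=> E; have := hB x xD; rewrite E /B mem_enum inE.
    by rewrite (imset_f _ yD).
  have ix : index x A < size B by rewrite -sAB index_mem /A mem_enum inE.
  have iy : index y A < size B by rewrite -sAB index_mem /A mem_enum inE.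
  move=> /eqP; rewrite /h (set_nth_default y) // nth_uniq ?enum_uniq //.
  move/eqP/(index_inj x); apply; by rewrite /A mem_enum inE.
exists (perm sinj) => x xD; by rewrite permE /s xD.
Qed.


Lemma reduced_nth k (a0 : letter k) (u : seq (letter k)) j :
  reduced u -> j.+1 < size u ->
  ~~ (((nth a0 u j).1 == (nth a0 u j.+1).1) && ((nth a0 u j).2 != (nth a0 u j.+1).2)).
Proof.
elim: u j => [|a [|b u] IH] j //=.
move=> /andP [H1 H2] Hj; case: j Hj => [|j] Hj //=.
by apply: IH.
Qed.

Lemma path_perm k (u : seq (letter k)) :
  reduced u -> u <> [::] ->
  exists sigma : 'I_k -> {perm 'I_(size u).+1}, weval sigma u <> 1%g.
Proof.
case: u => [//|a0 u'] Hred _.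
set u := a0 :: u'.
set m := size u.
pose Dset (i : 'I_k) := [set p : 'I_m.+1 | ((p < m) && (nth a0 u p == (i,false)))
                     || ((0 < p) && (nth a0 u p.-1 == (i,true)))].
pose f (i : 'I_k) (p : 'I_m.+1) : 'I_m.+1 :=
  if (p < m) && (nth a0 u p == (i,false)) then inord p.+1 else inord p.-1.
have finj i : {in Dset i &, injective (f i)}.
  move=> p q; rewrite !inE /f.
  have Hpm := ltn_ord p; have Hqm := ltn_ord q.
  case: (boolP ((p < m) && (nth a0 u p == (i,false)))) => cp;
  case: (boolP ((q < m) && (nth a0 u q == (i,false)))) => cq /= Hp Hq;
    move=> /(congr1 (@nat_of_ord _)); rewrite !inordK;
    try (by case/andP: cp); try (by case/andP: cq);
    try (by apply: leq_trans (leq_pred _) _; rewrite -ltnS);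
    try (by move=> [] /val_inj); try (by move/eqP; rewrite -(eqn_add2r 1) !addn1 !prednK //; move/eqP/val_inj).
  - case/andP: cp => pm /eqP np; case/andP: Hq => q0 /eqP nq.
    move=> E; have Eq : (q.-1 = p.+1) by [].
    have := reduced_nth a0 Hred (j := p).
    rewrite np -Eq nq /= eqxx /=.
    have Hq' : q.-1 < (size u').+1 by rewrite /m /= in Hqm; rewrite -ltnS prednK.
    by move=> H; have := H Hq'.
  - case/andP: cq => pm /eqP nq; case/andP: Hp => p0 /eqP np.
    move=> E; have Ep : (p.-1 = q.+1) by [].
    have := reduced_nth a0 Hred (j := q).
    rewrite nq -Ep np /= eqxx /=.
    have Hp' : p.-1 < (size u').+1 by rewrite /m /= in Hpm; rewrite -ltnS prednK.
    by move=> H; have := H Hp'.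
  case/andP: Hp => p0 _; case/andP: Hq => q0 _ => E.
  by apply: val_inj; rewrite /= -(prednK p0) -(prednK q0) E.
have [sigma Hsig] : exists sigma : 'I_k -> {perm 'I_m.+1}, forall i, {in Dset i, sigma i =1 f i}.
  exact: (fin_all_exists (fun i => extend_perm (finj i))).
have step j : j < m ->
  ((if (nth a0 u j).2 then (sigma (nth a0 u j).1)^-1 else sigma (nth a0 u j).1)%g
     (inord j) = inord j.+1 :> 'I_m.+1).
  move=> jm.
  case E : (nth a0 u j) => [i b]; case: b E => /= E.
    apply: (@perm_inj _ (sigma i)); rewrite -permM mulVg perm1.
    have jD : (inord j.+1 : 'I_m.+1) \in Dset i.
      by rewrite inE inordK // E eqxx orbT.
    rewrite Hsig // /f inordK //.
    case: ifP => [/andP [jm' /eqP E']|_]; last by [].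
    have := reduced_nth a0 Hred (j := j); rewrite E E' /= eqxx /=.
    by move=> /(_ jm').
  have jD : (inord j : 'I_m.+1) \in Dset i.
    by rewrite inE inordK ?E ?eqxx ?jm // ltnW.
  by rewrite Hsig // /f inordK ?E ?eqxx ?jm // ltnW.
have walk j : j <= m ->
  (weval sigma (drop j u)) (inord j) = inord m :> 'I_m.+1.
  move=> jm; move Hd: (m - j) => d; elim: d j jm Hd => [|d IH] j jm Hd.
    have -> : j = m by apply/eqP; rewrite eqn_leq jm /= -subn_eq0 Hd.
    by rewrite drop_size /= perm1.
  have jm' : j < m by rewrite -subn_gt0 Hd.
  rewrite (drop_nth a0 jm') /= permM step //.
  apply: (IH j.+1); lia.
exists sigma => H1.
have := walk 0 (leq0n _); rewrite drop0 H1 perm1.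
move/(congr1 (@nat_of_ord _)); rewrite !inordK //.
Qed.


Section Reg.
Variables (X : finGroupType) (n : nat) (Hn : #|X| <= n).

Definition emb (x : X) : 'I_n := widen_ord Hn (enum_rank x).

Lemma emb_inj : injective emb.
Proof. by move=> x y /(congr1 (@nat_of_ord _)) /= /val_inj /enum_rank_inj. Qed.

Definition Pf (s : X) (o : 'I_n) : 'I_n :=
  if [pick x | emb x == o] is Some x then emb (x * s)%g else o.

Lemma PfE s x : Pf s (emb x) = emb (x * s)%g.
Proof.
rewrite /Pf; case: pickP => [y /eqP /emb_inj -> //|/(_ x)]; by rewrite eqxx.
Qed.

Lemma PfN s o : (forall x, emb x != o) -> Pf s o = o.
Proof.
move=> H; rewrite /Pf; case: pickP => [y /eqP E|//]; by have := H y; rewrite E eqxx.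
Qed.

Lemma Pf_inj s : injective (Pf s).
Proof.
move=> o1 o2.
case: (pickP (fun x => emb x == o1)) => [x1 /eqP <-|N1];
case: (pickP (fun x => emb x == o2)) => [x2 /eqP <-|N2].
- by rewrite !PfE => /emb_inj /mulIg ->.
- rewrite PfE (PfN s (o:=o2)) => [E|x]; last by rewrite N2.
  by have := N2 (x1 * s)%g; rewrite E eqxx.
- rewrite PfE (PfN s (o:=o1)) => [E|x]; last by rewrite N1.
  by have := N1 (x2 * s)%g; rewrite -E eqxx.
by rewrite !PfN // => x; rewrite ?N1 ?N2.
Qed.

Definition Preg (s : X) : {perm 'I_n} := perm (@Pf_inj s).

Lemma Preg_hom : is_hom Preg.
Proof.
move=> s t; apply/permP => o; rewrite permM !permE.
case: (pickP (fun x => emb x == o)) => [x /eqP <-|N].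
  by rewrite !PfE mulgA.
by rewrite !PfN // => x; rewrite N.
Qed.

Lemma cnt_Preg s : cnt (Preg s) 1%g <= #|X|.
Proof.
rewrite /cnt -(card_imset _ emb_inj) subset_leq_card //.
apply/fintype.subsetP => o; rewrite !inE permE perm1.
case: (pickP (fun x => emb x == o)) => [x /eqP <- _|N]; first by apply: imset_f.
by rewrite PfN ?eqxx // => x; rewrite N.
Qed.

Lemma cnt_Preg_full s : s != 1%g -> cnt (Preg s) 1%g = #|X|.
Proof.
move=> s1; apply/eqP; rewrite eqn_leq cnt_Preg /cnt.
rewrite -(card_imset _ emb_inj) subset_leq_card //.
apply/fintype.subsetP => o /imsetP [x _ ->]; rewrite !inE permE perm1 PfE.
by rewrite (inj_eq emb_inj) -{2}[x]mulg1 (inj_eq (@mulgI _ x)).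
Qed.
End Reg.

Section SecG.
Local Open Scope ring_scope.

Lemma lowb k (Gamma : groupType) (g : 'I_k -> Gamma) eps delta E u n :
  valid_pair g eps delta E -> reduced u -> u <> [::] -> weval g u = 1%g ->
  (((size u).+1)`! <= n)%N ->
  ((((size u).+1)`!)%:R / n%:R < delta \/ (forall r, r \in E -> r = [::])) ->
  (((size u).+1)`!)%:R / n%:R <= (size u)%:R * eps.
Proof.
move=> [d0 [d1 [_ [Eker Hv]]]] ured une ug Hn Hc.
have [sigma Hs] := path_perm ured une.
have HX : (#|{perm 'I_(size u).+1}| <= n)%N by rewrite card_Sn.
pose rho i := Preg HX (sigma i).
have Hh := Preg_hom HX.
have [phi [phom Hphi]] : exists phi : Gamma -> {perm 'I_n},
      is_hom phi /\ forall i : 'I_k, (hdist (rho i) (phi (g i)) < eps)%R.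
  apply: Hv => r rE; rewrite /rho weval_hom //.
  case: Hc => [Hc|Hc].
    apply: le_lt_trans Hc; rewrite hdE ler_wpM2r ?invr_ge0 ?ler0n // ler_nat.
    by rewrite -card_Sn cnt_Preg.
  by rewrite (Hc r rE) /= (hom1 Hh) hd_refl.
have := wdist u (fun i => ltW (Hphi i)).
rewrite weval_hom // ug (hom1 phom) /rho weval_hom // hdE cnt_Preg_full ?card_Sn //.
by apply/eqP.
Qed.

End SecG.

Section SecH.
Local Open Scope ring_scope.

Lemma Enorm_ge k (E : seq (seq (letter k))) r : r \in E -> (size r <= Enorm E)%N.
Proof. by move=> rE; rewrite /Enorm (big_rem r rE) /= leq_addr. Qed.

Lemma lowb2 k (Gamma : groupType) (g : 'I_k -> Gamma) (w0 : seq (letter k)) (l : nat) delta E :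
  in_ker g w0 -> w0 <> [::] -> (size w0 < l)%N ->
  valid_pair g (10 * l%:R)^-1 delta E ->
  5 * l%:R <= (Enorm E)%:R / delta.
Proof.
move=> [w0red w0g] w0n w0l Hv.
have l0 : (0 < l)%N by apply: leq_ltn_trans w0l.
have lr0 : 0 < l%:R :> R by rewrite ltr0n.
have [d0 [d1 _]] := Hv.
case: (boolP (all (fun r => r == [::]) E)) => [/allP Hall|].
  have := lowb Hv w0red w0n w0g (leqnn _) (or_intror (fun r rE => eqP (Hall r rE))).
  rewrite divff ?pnatr_eq0 -?lt0n ?fact_gt0 //.
  have : (size w0)%:R < l%:R :> R by rewrite ltr_nat.
  move=> H1 H2; exfalso.
  have : 1 < 1 :> R; last by rewrite ltxx.
  apply: le_lt_trans H2 _.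
  rewrite ltr_pdivrMr ?mulr_gt0 ?ltr0n // mul1r.
  lra.
move/allPn => [r0 r0E r0n].
have [r0red r0g] : in_ker g r0 by case: Hv => _ [_ [_ [H _]]]; exact: H.
set B := ((size r0).+1)`!.
have B1 : (1 <= B)%N by apply: fact_gt0.
have B1r : 1 <= B%:R :> R by rewrite ler1n.
set n := (Num.truncn (B%:R / delta)).+1.
have Hn1 : B%:R / delta < n%:R by apply: truncnS_gt.
have Hn2 : n%:R <= B%:R / delta + 1.
  rewrite /n -addn1 natrD lerD2r truncn_le divr_ge0 // ?ler0n // ltW //.
have Bd : B%:R <= B%:R / delta.
  rewrite ler_pdivlMr //; nra.
have Bn : (B <= n)%N by rewrite -(ler_nat R); apply: ltW; apply: le_lt_trans Hn1.
have n0 : 0 < n%:R :> R by rewrite ltr0n.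
have Hc : B%:R / n%:R < delta by rewrite ltr_pdivrMr // mulrC -ltr_pdivrMr.
have r0ne : r0 <> [::] by move=> H; move: r0n; rewrite H.
have := lowb Hv r0red r0ne r0g Bn (or_introl Hc).
rewrite -/B => H.
have h1 : delta * n%:R <= 2 * B%:R.
  apply: le_trans (ler_wpM2l (ltW d0) Hn2) _.
  rewrite mulrDr mulrCA divff ?gt_eqF // mulr1; lra.
have h2 : delta / 2 <= B%:R / n%:R by rewrite ler_pdivlMr //; lra.
have h3 : (size r0)%:R <= (Enorm E)%:R :> R by rewrite ler_nat Enorm_ge.
have h4 : delta / 2 <= (Enorm E)%:R / (10 * l%:R).
  apply: le_trans h2 _; apply: le_trans H _.
  by rewrite ler_wpM2r // invr_ge0 mulr_ge0 // ler0n.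
rewrite ler_pdivlMr //.
move: h4; rewrite ler_pdivlMr ?mulr_gt0 //; lra.
Qed.

End SecH.


Theorem proposition2p20 (k : nat) (Gamma : groupType) (g : 'I_k -> Gamma) :
  epi g -> not_iso g -> sofic Gamma -> stable g ->
  exists C : R, (0 < C)%R /\
    forall l : nat, (C <= l%:R)%R ->
      forall D : nat,
        is_least (sofic_profile_at g
                    (Num.truncn (2 * stab_fun g (10 * l%:R))%R)) D ->
        residual_le g l D`!.
Proof.
move=> _ [w0 [w0k w0n]] _ Hst.
exists ((size w0)%:R + 1)%R; split; first by rewrite ltr_wpDl ?ler0n.
move=> l Hl D [[psi Hpsi] _].
have w0l : (size w0 < l)%N.
  by rewrite -(ltr_nat R); apply: lt_le_trans Hl; rewrite ltrDl.
have l0 : (0 < l)%N by apply: leq_ltn_trans w0l.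
have lr1 : (1 <= l%:R :> R)%R by rewrite ler1n.
pose x : R := (10 * l%:R)%R.
rewrite -/x in Hpsi.
have x0 : (0 < x)%R by rewrite /x; lra.
pose S := [set y : R | exists delta E,
          valid_pair g (x^-1)%R delta E /\ y = ((Enorm E)%:R / delta)%R]%classic.
have Sne : (S !=set0)%classic.
  have [|delta [E HE]] := Hst x^-1%R; first by rewrite invr_gt0.
  by exists ((Enorm E)%:R / delta)%R; exists delta, E.
have Flb : (5 * l%:R <= stab_fun g x)%R.
  apply: lb_le_inf => // y [delta [E [HE ->]]].
  exact: lowb2 w0k w0n w0l HE.
pose F := stab_fun g x.
rewrite -/F in Hpsi Flb.
have [y [delta [E [HE ->]]] Hy] : exists2 y, S y & (y < 2 * F - 1)%R.
  apply: inf_lt => //; rewrite -/(stab_fun g x) -/F; lra.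
pose L := Num.truncn (2 * F)%R.
rewrite -/L in Hpsi.
have HL1 : (2 * F - 1 < L%:R)%R.
  have := truncnS_gt (2 * F)%R; rewrite -/L -addn1 natrD; lra.
have Lr0 : (0 < L%:R :> R)%R by lra.
have L2l : (2 * l <= L)%N.
  rewrite -(ler_nat R) natrM; apply: ltW; apply: le_lt_trans HL1.
  have T : (2 * l%:R <= 2 * F - 1 :> R)%R by lra. exact: T.
have [d0 [d1 [_ [Eker Hv]]]] := HE.
have EL : ((Enorm E)%:R < delta * L%:R)%R.
  move: Hy; rewrite ltr_pdivrMr // => H; apply: lt_le_trans H _.
  by rewrite mulrC ler_wpM2l ?ltW.
have psi1 : psi 1%g = 1%g by case: Hpsi => _ [_ ->] //; exists [::].
have Happ := approx Hpsi.
have [|phi [phom Hphi]] := Hv D (fun i => psi (g i)).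
  move=> r rE; have [rred rg] := Eker r rE.
  have sr : ((size r)%:R <= (Enorm E)%:R :> R)%R by rewrite ler_nat Enorm_ge.
  have srL : (size r <= L)%N by rewrite -(ler_nat R); nra.
  have := Happ r srL; rewrite rg psi1 => H; apply: le_lt_trans H _.
  apply: le_lt_trans (_ : (Enorm E)%:R / L%:R < delta)%R.
    by rewrite ler_wpM2r ?invr_ge0 ?ler0n.
  by rewrite ltr_pdivrMr.
exists (perm_of (ordinal D) : finGroupType), phi; split => //; split; last first.
  by rewrite cardsT card_Sn.
move=> a b [u [us ua]] [v [vs vb]] Hab.
case: (Classical_Prop.classic (a = b)) => // anb; exfalso.
pose w' := winv u ++ v.
pose c := (a^-1 * b)%g.
have wc : weval g w' = c by rewrite /w' weval_cat weval_winv ua vb.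
have sw : (size w' <= 2 * l)%N by rewrite /w' size_cat size_winv; lia.
have swL : (size w' <= L)%N by apply: leq_trans L2l.
have cn1 : c <> 1%g.
  move=> c1; apply: anb; rewrite -[b](mulKVg a) -/c c1 mulg1 //.
have cb : ball g L c by exists w'.
have H1 : (1 - L%:R^-1 < hdist (psi c) 1%g)%R by case: Hpsi => _ [H _]; apply: H.
have H2 := Happ w' swL; rewrite wc in H2.
have H3 := wdist w' (fun i => ltW (Hphi i)).
rewrite (weval_hom _ _ phom) wc /c phom (homV _ phom) Hab mulVg in H3.
have H4 := hd_tri (psi c) (weval (fun i => psi (g i)) w') 1%g.
rewrite hd_sym in H2.
have swr : ((size w')%:R <= 2 * l%:R :> R)%R by rewrite -natrM ler_nat.
pose etaa : R := (L%:R^-1)%R.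
have Leta : (L%:R * etaa = 1)%R by rewrite /etaa divff // gt_eqF.
have eta0 : (0 <= etaa)%R by rewrite /etaa invr_ge0 ltW.
have A : ((size w')%:R * etaa <= 2 * l%:R * etaa)%R by rewrite ler_wpM2r.
have xl : (2 * l%:R * x^-1 = 1 / 5 :> R)%R.
  by rewrite /x; field; rewrite pnatr_eq0 -lt0n.
have B : ((size w')%:R * x^-1 <= 1 / 5 :> R)%R.
  by rewrite -xl ler_wpM2r // invr_ge0 ltW.
have C1 : (1 - etaa < 2 * l%:R * etaa + 1 / 5)%R.
  rewrite -/etaa in H1 H2; lra.
have C2 : (L%:R * (1 - etaa) < L%:R * (2 * l%:R * etaa + 1 / 5) :> R)%R.
  by rewrite ltr_pM2l.
have E1 : (L%:R * (1 - etaa) = L%:R - 1 :> R)%R by rewrite mulrBr mulr1 Leta.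
have E2 : (L%:R * (2 * l%:R * etaa + 1 / 5) = 2 * l%:R + L%:R / 5 :> R)%R.
  by rewrite mulrDr mulrCA Leta mulr1 mul1r.
rewrite E1 E2 in C2.
move: C2 HL1 Flb lr1; clear; move=> C2 HL1 Flb lr1; lra.
Qed.
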